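(* Let $\alpha>0>\beta$ with $|\beta|<\alpha$, and put $\delta=\left(\frac{\alpha-\beta}{\alpha+\beta}\right)^2$ (so $\delta>1$) and $K=\frac{2\alpha}{(\alpha+\beta)^2}>0$. Let $\omega>0$, $\gamma>0$, $k_1>0$ with $k_1\neq 1$, and put $M=\delta^{\frac{1}{1-\delta}}-\delta^{\frac{\delta}{1-\delta}}$. For $T\ge 0$ define, for $s\in\mathbb{R}$ and $y>0$, $$\mathcal{G}_T(s,y)=\left(s-\frac{\ln y}{K}-T,\; y^{\delta}+\gamma\bigl(1+k_1\sin(2\omega s)\bigr)\right),$$ and consider the fixed points $(s,y)$ of $\mathcal{G}_T$ (i.e. $\mathcal{G}_T(s,y)=(s,y)$), where $s$ is taken modulo $\pi/\omega$. Then the curves $k_1=1$, $\gamma(1-k_1)=M$ and $\gamma(1+k_1)=M$ separate the first quadrant of the $(k_1,\gamma)$-plane into five regions with the following behaviour: (1) if $k_1\in(0,1)$ and $M<\gamma(1-k_1)$, then $\mathcal{G}_T$ has no fixed points for any $T$; (2) if $k_1\in(0,1)$ and $\gamma(1-k_1)<M<\gamma(1+k_1)$, then there are fixed points for each $T\in[T_1,T_2]$; (3) if $k_1\in(0,1)$ and $\gamma(1+k_1)<M$, then there are fixed points for each $T\in[T_1,T_2]\cup[T_3,T_4]$; (4) if $k_1>1$ and $M<\gamma(1+k_1)$, then there are fixed points for each $T\in(0,\infty)$; (5) if $k_1>1$ and $\gamma(1+k_1)<M$, then there are fixed points for each $T\in(0,T_1]\cup[T_2,\infty)$; where $0<T_1<T_2<T_3<T_4$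 are real numbers (depending on the parameters). Moreover, when fixed points exist for $T$ in an interval, there are exactly two fixed points (with $s$ modulo $\pi/\omega$) for each $T$ in the interior of the interval and only one for $T$ in the boundary of the interval. These qualitative features occur for every $\omega>0$: the sets of values of $T$ above and the $y$-coordinates of the fixed points do not depend on $\omega$, and only the coordinate $s$ of the fixed points depends on $\omega$.
   Context: The map $\mathcal{G}_T$ is obtained from an approximate first return map $G(s,y)$ of a periodically forced system by subtracting the auxiliary return time $T$ from the first coordinate; $\mathcal{G}_T$ commutes with the translation $s\mapsto s+\pi/\omega$, which is why fixed points are counted with $s$ modulo $\pi/\omega$. *)

(* Defs.v *)
From Stdlib Require Import Reals Lra.
Open Scope R_scope.

Definition delta (a b : R) : R := ((a - b) / (a + b)) ^ 2.
Definition Kc (a b : R) : R := 2 * a / (a + b) ^ 2.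
Definition Mc (a b : R) : R :=
  Rpower (delta a b) (1 / (1 - delta a b))
  - Rpower (delta a b) (delta a b / (1 - delta a b)).

Definition GT (a b om gam k1 T : R) (p : R * R) : R * R :=
  (fst p - ln (snd p) / Kc a b - T,
   Rpower (snd p) (delta a b) + gam * (1 + k1 * sin (2 * om * fst p))).

Definition is_fixed (a b om gam k1 T s y : R) : Prop :=
  0 < y /\ GT a b om gam k1 T (s, y) = (s, y).

(* fixed points counted with s modulo pi/omega: representatives s in [0, pi/omega) *)
Definition fixed_rep (a b om gam k1 T s y : R) : Prop :=
  0 <= s < PI / om /\ is_fixed a b om gam k1 T s y.

Definition has_fixed (a b om gam k1 T : R) : Prop :=
  exists s y, is_fixed a b om gam k1 T s y.

Definition exactly_one_fixed (a b om gam k1 T : R) : Prop :=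
  exists s y, fixed_rep a b om gam k1 T s y /\
    forall s' y', fixed_rep a b om gam k1 T s' y' -> s' = s /\ y' = y.

Definition exactly_two_fixed (a b om gam k1 T : R) : Prop :=
  exists s1 y1 s2 y2,
    fixed_rep a b om gam k1 T s1 y1 /\ fixed_rep a b om gam k1 T s2 y2 /\
    (s1, y1) <> (s2, y2) /\
    forall s y, fixed_rep a b om gam k1 T s y ->
      (s, y) = (s1, y1) \/ (s, y) = (s2, y2).

(* Main.v *)
Require Import Defs.
From Stdlib Require Import Reals.
Open Scope R_scope.
From Stdlib Require Import Reals Lra.
From Coquelicot Require Import Coquelicot.
Open Scope R_scope.

Definition g (K d T : R) := exp (-(K*T)) - exp (d * (-(K*T))).
Definition g' (K d x : R) := -K*exp(-(K*x)) + d*K*exp(d*(-(K*x))).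
Definition Tstar (K d : R) := ln d / ((d-1)*K).

Lemma g_der K d x : derivable_pt_lim (g K d) x (g' K d x).
Proof. apply is_derive_Reals. unfold g, g'. auto_derive; auto. ring. Qed.

Lemma g_cont K d : continuity (g K d).
Proof. intro x. apply derivable_continuous_pt. exact (exist _ _ (g_der K d x)). Qed.

Lemma g'_eq K d x : g' K d x = K*exp(d*(-(K*x)))*(d - exp((d-1)*K*x)).
Proof.
  unfold g'. replace (-(K*x)) with ((d-1)*K*x + d*(-(K*x))) at 1 by ring.
  rewrite exp_plus. ring.
Qed.

Lemma Tstar_pos K d : 0 < K -> 1 < d -> 0 < Tstar K d.
Proof.
  intros hK hd. unfold Tstar. apply Rdiv_lt_0_compat.
  - rewrite <- ln_1. apply ln_increasing; lra.
  - apply Rmult_lt_0_compat; lra.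
Qed.

Lemma g'_pos K d x : 0 < K -> 1 < d -> x < Tstar K d -> 0 < g' K d x.
Proof.
  intros hK hd hx. rewrite g'_eq. apply Rmult_lt_0_compat.
  - apply Rmult_lt_0_compat; [lra| apply exp_pos].
  - assert (H : (d-1)*K*x < ln d).
    { unfold Tstar in hx. assert (Hp: 0 < (d-1)*K) by (apply Rmult_lt_0_compat; lra).
      assert (E: ln d = ln d / ((d-1)*K) * ((d-1)*K)) by (field; lra).
      rewrite E. nra. }
    apply exp_increasing in H. rewrite exp_ln in H; lra.
Qed.

Lemma g'_neg K d x : 0 < K -> 1 < d -> Tstar K d < x -> g' K d x < 0.
Proof.
  intros hK hd hx. rewrite g'_eq.
  assert (H : ln d < (d-1)*K*x).
  { unfold Tstar in hx. assert (Hp: 0 < (d-1)*K) by (apply Rmult_lt_0_compat; lra).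
    assert (E: ln d = ln d / ((d-1)*K) * ((d-1)*K)) by (field; lra).
    rewrite E. nra. }
  apply exp_increasing in H. rewrite exp_ln in H; [|lra].
  assert (0 < K * exp (d * - (K * x))) by (apply Rmult_lt_0_compat; [lra| apply exp_pos]).
  nra.
Qed.

Lemma g_incr K d x y : 0 < K -> 1 < d -> x < y -> y <= Tstar K d -> g K d x < g K d y.
Proof.
  intros hK hd hxy hy.
  destruct (MVT_cor2 (g K d) (g' K d) x y hxy) as [c [Hc1 Hc2]].
  { intros; apply g_der. }
  assert (0 < g' K d c) by (apply g'_pos; lra). nra.
Qed.

Lemma g_decr K d x y : 0 < K -> 1 < d -> Tstar K d <= x -> x < y -> g K d y < g K d x.
Proof.
  intros hK hd hx hxy.
  destruct (MVT_cor2 (g K d) (g' K d) x y hxy) as [c [Hc1 Hc2]].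
  { intros; apply g_der. }
  assert (g' K d c < 0) by (apply g'_neg; lra). nra.
Qed.

Lemma g_le_M K d T : 0 < K -> 1 < d -> g K d T <= g K d (Tstar K d).
Proof.
  intros hK hd. destruct (Rtotal_order T (Tstar K d)) as [H|[H|H]].
  - left; apply g_incr; lra.
  - subst; lra.
  - left; apply g_decr; lra.
Qed.

Lemma g_0 K d : g K d 0 = 0.
Proof. unfold g. rewrite Rmult_0_r, Ropp_0, Rmult_0_r. ring. Qed.

Lemma g_pos K d T : 0 < K -> 1 < d -> 0 < T -> 0 < g K d T.
Proof.
  intros hK hd hT. unfold g.
  assert (0 < K*T) by (apply Rmult_lt_0_compat; lra).
  assert (H1 : d * - (K*T) < - (K*T)) by nra.
  apply exp_increasing in H1. lra.
Qed.

Lemma g_lt_exp K d T : g K d T < exp (-(K*T)).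
Proof. unfold g. pose proof (exp_pos (d * - (K*T))). lra. Qed.

Lemma M_lt_1 K d : 0 < K -> 1 < d -> g K d (Tstar K d) < 1.
Proof.
  intros hK hd. pose proof (Tstar_pos K d hK hd).
  eapply Rlt_trans. apply g_lt_exp. rewrite <- exp_0. apply exp_increasing. nra.
Qed.

Lemma g_small K d L : 0 < K -> 1 < d -> 0 < L < 1 -> exists T, Tstar K d < T /\ g K d T < L.
Proof.
  intros hK hd hL. pose proof (Tstar_pos K d hK hd).
  assert (hl : ln L < 0) by (rewrite <- ln_1; apply ln_increasing; lra).
  exists (Tstar K d - ln L / K). split.
  - assert (0 < - ln L / K) by (apply Rdiv_lt_0_compat; lra).
    unfold Rdiv in *. lra.
  - eapply Rlt_trans. apply g_lt_exp.
    replace (- (K * (Tstar K d - ln L / K))) with (- (K * Tstar K d) + ln L) by (field; lra).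
    rewrite exp_plus, exp_ln by lra.
    assert (exp (- (K * Tstar K d)) < 1) by (rewrite <- exp_0; apply exp_increasing; nra).
    nra.
Qed.

Lemma level K d L : 0 < K -> 1 < d -> 0 < L -> L < g K d (Tstar K d) ->
  exists Ta Tb, 0 < Ta < Tstar K d /\ Tstar K d < Tb /\ g K d Ta = L /\ g K d Tb = L /\
   (forall T, T < Ta -> g K d T < L) /\ (forall T, Ta < T < Tb -> L < g K d T) /\
   (forall T, Tb < T -> g K d T < L).
Proof.
  intros hK hd hL hLM. pose proof (Tstar_pos K d hK hd) as hTs.
  pose proof (M_lt_1 K d hK hd).
  destruct (IVT (fun T => g K d T - L) 0 (Tstar K d)) as [Ta [HTa1 HTa2]].
  { apply continuity_minus. apply g_cont. apply continuity_const. intros ??; auto. }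
  { lra. } { rewrite g_0; lra. } { lra. }
  destruct (g_small K d L hK hd) as [Tb0 [HTb0 HgTb0]]; [lra|].
  destruct (IVT (fun T => L - g K d T) (Tstar K d) Tb0) as [Tb [HTb1 HTb2]].
  { apply continuity_minus. apply continuity_const. intros ??; auto. apply g_cont. }
  { lra. } { lra. } { lra. }
  simpl in HTa2, HTb2.
  assert (Ta <> 0) by (intro E; subst; rewrite g_0 in HTa2; lra).
  assert (Ta <> Tstar K d) by (intro E; rewrite E in HTa2; lra).
  assert (Tb <> Tstar K d) by (intro E; rewrite E in HTb2; lra).
  exists Ta, Tb. repeat split; try lra.
  - intros T HT. replace L with (g K d Ta) by lra. apply g_incr; lra.
  - intros T HT. destruct (Rle_or_lt T (Tstar K d)).
    + replace L with (g K d Ta) by lra. apply g_incr; lra.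
    + replace L with (g K d Tb) by lra. apply g_decr; lra.
  - intros T HT. replace L with (g K d Tb) by lra. apply g_decr; lra.
Qed.
Lemma sin_m2PI x : sin (x - 2*PI) = sin x.
Proof. rewrite sin_minus, sin_2PI, cos_2PI. ring. Qed.
Lemma sin_p2PI x : sin (2*PI + x) = sin x.
Proof. rewrite sin_plus, sin_2PI, cos_2PI. ring. Qed.

Lemma sin_sols th : 0 <= th < 2*PI ->
  th = asin (sin th) \/ th = PI - asin (sin th) \/ th = 2*PI + asin (sin th).
Proof.
  intros H. pose proof PI_RGT_0.
  destruct (Rle_or_lt th (PI/2)).
  - left. rewrite asin_sin; lra.
  - destruct (Rle_or_lt th (3*(PI/2))).
    + right; left. rewrite <- sin_PI_x, asin_sin; lra.
    + right; right. rewrite <- sin_m2PI, asin_sin; lra.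
Qed.

Lemma range_conv om s : 0 < om -> (0 <= s < PI/om <-> 0 <= 2*om*s < 2*PI).
Proof.
  intros hom. assert (E : PI = PI/om*om) by (field; lra).
  split; intros [H1 H2]; split.
  - nra.
  - rewrite E. nra.
  - nra.
  - rewrite E in H2. nra.
Qed.

Lemma th_s om th : 0 < om -> 2*om*(th/(2*om)) = th.
Proof. intros; field; lra. Qed.

Lemma s_th om s X : 0 < om -> 2*om*s = X -> s = X/(2*om).
Proof. intros ? H; rewrite <- H; field; lra. Qed.

Lemma sin_two om c : 0 < om -> -1 < c < 1 ->
  exists s1 s2, (0 <= s1 < PI/om) /\ (0 <= s2 < PI/om) /\ s1 <> s2 /\
   sin (2*om*s1) = c /\ sin (2*om*s2) = c /\
   forall s, 0 <= s < PI/om -> sin (2*om*s) = c -> s = s1 \/ s = s2.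
Proof.
  intros hom hc. pose proof PI_RGT_0.
  set (a0 := asin c).
  assert (Hs : sin a0 = c) by (apply sin_asin; lra).
  pose proof (asin_bound c) as Hb. fold a0 in Hb.
  assert (a0 <> PI/2) by (intro E; rewrite E, sin_PI2 in Hs; lra).
  assert (a0 <> -(PI/2)) by (intro E; rewrite E, sin_neg, sin_PI2 in Hs; lra).
  set (t1 := PI - a0).
  set (t2 := if Rle_dec 0 a0 then a0 else 2*PI + a0).
  assert (Ht2 : (0 <= a0 /\ t2 = a0) \/ (a0 < 0 /\ t2 = 2*PI + a0)).
  { unfold t2; destruct (Rle_dec 0 a0); [left|right]; split; lra. }
  assert (St1 : sin t1 = c) by (unfold t1; rewrite sin_PI_x; auto).
  assert (St2 : sin t2 = c) by (destruct Ht2 as [[_ E]|[_ E]]; rewrite E; [auto| rewrite sin_p2PI; auto]).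
  exists (t1/(2*om)), (t2/(2*om)).
  rewrite !range_conv, !th_s by lra.
  repeat split; try lra; try (unfold t1; lra); try (destruct Ht2 as [[? E]|[? E]]; rewrite E; lra); auto.
  - intro E. assert (t1 = t2).
    { rewrite <- (th_s om t1), <- (th_s om t2), E by lra; reflexivity. }
    destruct Ht2 as [[? E2]|[? E2]]; rewrite E2 in *; unfold t1 in *; lra.
  - intros s Hr Hsin. rewrite range_conv in Hr by lra.
    destruct (sin_sols _ Hr) as [E|[E|E]]; rewrite Hsin in E; fold a0 in E.
    + right. apply s_th; auto. destruct Ht2 as [[? E2]|[? E2]]; rewrite E2; lra.
    + left. apply s_th; auto.
    + right. apply s_th; auto. destruct Ht2 as [[? E2]|[? E2]]; rewrite E2; lra.
Qed.

Lemma sin_one om c : 0 < om -> (c = 1 \/ c = -1) ->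
  exists s0, (0 <= s0 < PI/om) /\ sin (2*om*s0) = c /\
   forall s, 0 <= s < PI/om -> sin (2*om*s) = c -> s = s0.
Proof.
  intros hom hc. pose proof PI_RGT_0.
  set (a0 := asin c).
  assert (Hs : sin a0 = c) by (apply sin_asin; lra).
  assert (Ha : a0 = PI/2 \/ a0 = -(PI/2)).
  { destruct hc as [E|E]; [left|right]; unfold a0; rewrite E.
    - rewrite <- sin_PI2 at 1. apply asin_sin; lra.
    - replace (-1) with (sin (-(PI/2))) by (rewrite sin_neg, sin_PI2; ring).
      apply asin_sin; lra. }
  exists ((PI - a0)/(2*om)). rewrite range_conv, th_s by lra.
  split; [destruct Ha as [E|E]; rewrite E; lra|]. split.
  - rewrite sin_PI_x; auto.
  - intros s Hr Hsin. rewrite range_conv in Hr by lra.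
    apply s_th; auto.
    destruct (sin_sols _ Hr) as [E|[E|E]]; rewrite Hsin in E; fold a0 in E;
      destruct Ha as [E2|E2]; rewrite E2 in *; lra.
Qed.
Definition cval a b gam k1 T := (g (Kc a b) (delta a b) T - gam)/(gam*k1).

Lemma is_fixed_iff a b om gam k1 T s y : Kc a b <> 0 ->
  is_fixed a b om gam k1 T s y <->
  (y = exp (-(Kc a b * T)) /\ g (Kc a b) (delta a b) T = gam*(1+k1*sin(2*om*s))).
Proof.
  intros hK. unfold is_fixed, GT, g; simpl. split.
  - intros [Hy Heq]. injection Heq as H1 H2.
    assert (Hl : ln y = -(Kc a b * T)).
    { assert (ln y / Kc a b = - T) by lra.
      replace (ln y) with (ln y / Kc a b * Kc a b) by (field; auto). rewrite H. ring. }
    assert (Ey : y = exp (-(Kc a b * T))) by (rewrite <- Hl, exp_ln; auto).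
    split; auto. unfold Rpower in H2. rewrite Hl in H2. lra.
  - intros [Ey Hg]. split; [rewrite Ey; apply exp_pos|].
    rewrite Ey. unfold Rpower. rewrite ln_exp. f_equal.
    + field; auto.
    + lra.
Qed.

Lemma sin_iff gam k1 G x : 0 < gam -> 0 < k1 ->
  (G = gam*(1+k1*x) <-> x = (G - gam)/(gam*k1)).
Proof.
  intros hg hk. assert (0 < gam*k1) by (apply Rmult_lt_0_compat; auto).
  split; intros E; subst; field; lra.
Qed.

Lemma is_fixed_c a b om gam k1 T s y : Kc a b <> 0 -> 0 < gam -> 0 < k1 ->
  is_fixed a b om gam k1 T s y <->
  (y = exp (-(Kc a b * T)) /\ sin(2*om*s) = cval a b gam k1 T).
Proof.
  intros hK hg hk. rewrite is_fixed_iff by auto. unfold cval.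
  rewrite sin_iff by auto. tauto.
Qed.

Lemma two_of_c a b om gam k1 T : Kc a b <> 0 -> 0 < gam -> 0 < k1 -> 0 < om ->
  -1 < cval a b gam k1 T < 1 -> exactly_two_fixed a b om gam k1 T.
Proof.
  intros hK hg hk hom hc.
  destruct (sin_two om _ hom hc) as [s1 [s2 [R1 [R2 [N [S1 [S2 All]]]]]]].
  exists s1, (exp (-(Kc a b * T))), s2, (exp (-(Kc a b * T))).
  unfold fixed_rep. rewrite !is_fixed_c by auto.
  repeat split; auto; try lra.
  - intro E; injection E; auto.
  - intros s y [Hr Hf]. rewrite is_fixed_c in Hf by auto. destruct Hf as [Ey Hs].
    destruct (All s Hr Hs) as [E|E]; subst; auto.
Qed.

Lemma one_of_c a b om gam k1 T : Kc a b <> 0 -> 0 < gam -> 0 < k1 -> 0 < om ->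
  (cval a b gam k1 T = 1 \/ cval a b gam k1 T = -1) -> exactly_one_fixed a b om gam k1 T.
Proof.
  intros hK hg hk hom hc.
  destruct (sin_one om _ hom hc) as [s0 [R0 [S0 All]]].
  exists s0, (exp (-(Kc a b * T))).
  unfold fixed_rep. rewrite !is_fixed_c by auto.
  repeat split; auto; try lra.
  - destruct H as [Hr Hf]. rewrite is_fixed_c in Hf by auto. destruct Hf as [Ey Hs].
    apply All; auto.
  - destruct H as [Hr Hf]. rewrite is_fixed_c in Hf by auto. destruct Hf as [Ey Hs]. auto.
Qed.

Lemma has_fixed_c a b om gam k1 T : Kc a b <> 0 -> 0 < gam -> 0 < k1 -> 0 < om ->
  (has_fixed a b om gam k1 T <-> -1 <= cval a b gam k1 T <= 1).
Proof.
  intros hK hg hk hom. unfold has_fixed. split.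
  - intros [s [y Hf]]. rewrite is_fixed_c in Hf by auto. destruct Hf as [_ Hs].
    rewrite <- Hs. apply SIN_bound.
  - intros Hc. exists (asin (cval a b gam k1 T) / (2*om)), (exp (-(Kc a b * T))).
    rewrite is_fixed_c by auto. split; auto. rewrite th_s by auto. apply sin_asin; auto.
Qed.

Lemma c_conv gam k1 G : 0 < gam -> 0 < k1 ->
  (-1 < (G-gam)/(gam*k1) <-> gam*(1-k1) < G) /\
  ((G-gam)/(gam*k1) < 1 <-> G < gam*(1+k1)) /\
  (-1 <= (G-gam)/(gam*k1) <-> gam*(1-k1) <= G) /\
  ((G-gam)/(gam*k1) <= 1 <-> G <= gam*(1+k1)) /\
  ((G-gam)/(gam*k1) = -1 <-> G = gam*(1-k1)) /\
  ((G-gam)/(gam*k1) = 1 <-> G = gam*(1+k1)).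
Proof.
  intros hg hk. assert (hp : 0 < gam*k1) by (apply Rmult_lt_0_compat; auto).
  set (q := (G-gam)/(gam*k1)).
  assert (EG : G = gam + q*(gam*k1)) by (unfold q; field; lra).
  rewrite EG. clearbody q. clear EG.
  repeat split; intro H; try nra; try (rewrite H; ring);
   try (assert (E: (q+1)*(gam*k1)=0) by lra; apply Rmult_integral in E; lra);
   try (assert (E: (q-1)*(gam*k1)=0) by lra; apply Rmult_integral in E; lra).
Qed.

Lemma y_indep a b om om' gam k1 T y : Kc a b <> 0 -> 0 < om -> 0 < om' ->
  (exists s, is_fixed a b om gam k1 T s y) -> (exists s, is_fixed a b om' gam k1 T s y).
Proof.
  intros hK h1 h2 [s Hf]. exists (om*s/om'). rewrite is_fixed_iff in * by auto.
  replace (2*om'*(om*s/om')) with (2*om*s) by (field; lra). auto.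
Qed.
Lemma two_fixed_g a b om gam k1 T : Kc a b <> 0 -> 0 < gam -> 0 < k1 -> 0 < om ->
  gam*(1-k1) < g (Kc a b) (delta a b) T < gam*(1+k1) -> exactly_two_fixed a b om gam k1 T.
Proof.
  intros hK hg hk hom [H1 H2]. apply two_of_c; auto.
  destruct (c_conv gam k1 (g (Kc a b) (delta a b) T) hg hk) as [C1 [C2 _]].
  unfold cval. split; [apply C1|apply C2]; auto.
Qed.

Lemma one_fixed_g a b om gam k1 T : Kc a b <> 0 -> 0 < gam -> 0 < k1 -> 0 < om ->
  (g (Kc a b) (delta a b) T = gam*(1-k1) \/ g (Kc a b) (delta a b) T = gam*(1+k1)) ->
  exactly_one_fixed a b om gam k1 T.
Proof.
  intros hK hg hk hom H. apply one_of_c; auto.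
  destruct (c_conv gam k1 (g (Kc a b) (delta a b) T) hg hk) as [_ [_ [_ [_ [C5 C6]]]]].
  unfold cval. destruct H; [right; apply C5|left; apply C6]; auto.
Qed.

Lemma has_fixed_g a b om gam k1 T : Kc a b <> 0 -> 0 < gam -> 0 < k1 -> 0 < om ->
  (has_fixed a b om gam k1 T <->
   gam*(1-k1) <= g (Kc a b) (delta a b) T <= gam*(1+k1)).
Proof.
  intros hK hg hk hom. rewrite has_fixed_c by auto.
  destruct (c_conv gam k1 (g (Kc a b) (delta a b) T) hg hk) as [_ [_ [C3 [C4 _]]]].
  unfold cval. rewrite C3, C4. tauto.
Qed.

Lemma level2 K d L : 0 < K -> 1 < d -> 0 < L -> L < g K d (Tstar K d) ->
  exists Ta Tb, 0 < Ta < Tstar K d /\ Tstar K d < Tb /\ g K d Ta = L /\ g K d Tb = L /\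
   (forall T, L <= g K d T <-> Ta <= T <= Tb) /\
   (forall T, g K d T <= L <-> T <= Ta \/ Tb <= T) /\
   (forall T, L < g K d T <-> Ta < T < Tb) /\
   (forall T, g K d T < L <-> T < Ta \/ Tb < T).
Proof.
  intros hK hd hL hLM.
  destruct (level K d L hK hd hL hLM) as [Ta [Tb [h1 [h2 [h3 [h4 [H1 [H2 H3]]]]]]]].
  exists Ta, Tb.
  assert (P : forall T, (g K d T < L /\ (T < Ta \/ Tb < T)) \/ (g K d T = L /\ (T = Ta \/ T = Tb))
                      \/ (L < g K d T /\ Ta < T < Tb)).
  { intro T. destruct (Rtotal_order T Ta) as [h|[h|h]].
    - left. split; auto.
    - right; left. subst; auto.
    - destruct (Rtotal_order T Tb) as [h'|[h'|h']].
      + right; right. split; auto. 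
      + right; left. subst; auto.
      + left. split; auto. }
  repeat split; try lra; intros; destruct (P T) as [[? ?]|[[? ?]|[? ?]]]; lra.
Qed.
Lemma delta_gt1 a b : 0 < a -> b < 0 -> Rabs b < a -> 1 < delta a b.
Proof.
  intros ha hb hab. rewrite Rabs_left in hab by auto.
  unfold delta. set (r := (a-b)/(a+b)).
  assert (E : r*(a+b) = a-b) by (unfold r; field; lra).
  assert (1 < r) by nra. simpl. nra.
Qed.

Lemma Kc_pos a b : 0 < a -> b < 0 -> Rabs b < a -> 0 < Kc a b.
Proof.
  intros ha hb hab. rewrite Rabs_left in hab by auto.
  unfold Kc. apply Rdiv_lt_0_compat; [lra|]. apply pow_lt; lra.
Qed.

Lemma Mc_eq a b : 0 < Kc a b -> 1 < delta a b ->
  Mc a b = g (Kc a b) (delta a b) (Tstar (Kc a b) (delta a b)).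
Proof.
  intros hK hd. unfold Mc, Rpower, g, Tstar. f_equal; f_equal; field; lra.
Qed.
Theorem theorem2 (a b gam k1 : R)
  (ha : 0 < a) (hb : b < 0) (hab : Rabs b < a)
  (hgam : 0 < gam) (hk1 : 0 < k1) (hk1' : k1 <> 1) :
  (* (1) *)
  ((k1 < 1 -> Mc a b < gam * (1 - k1) ->
    forall om, 0 < om -> forall T, 0 <= T -> ~ has_fixed a b om gam k1 T)
  /\
  (* (2) *)
  (k1 < 1 -> gam * (1 - k1) < Mc a b -> Mc a b < gam * (1 + k1) ->
    exists T1 T2, 0 < T1 < T2 /\
    forall om, 0 < om ->
      (forall T, 0 <= T -> (has_fixed a b om gam k1 T <-> T1 <= T <= T2)) /\
      (forall T, T1 < T < T2 -> exactly_two_fixed a b om gam k1 T) /\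
      exactly_one_fixed a b om gam k1 T1 /\
      exactly_one_fixed a b om gam k1 T2)
  /\
  (* (3) *)
  (k1 < 1 -> gam * (1 + k1) < Mc a b ->
    exists T1 T2 T3 T4, 0 < T1 < T2 /\ T2 < T3 < T4 /\
    forall om, 0 < om ->
      (forall T, 0 <= T -> (has_fixed a b om gam k1 T <->
                            (T1 <= T <= T2 \/ T3 <= T <= T4))) /\
      (forall T, (T1 < T < T2 \/ T3 < T < T4) -> exactly_two_fixed a b om gam k1 T) /\
      exactly_one_fixed a b om gam k1 T1 /\
      exactly_one_fixed a b om gam k1 T2 /\
      exactly_one_fixed a b om gam k1 T3 /\
      exactly_one_fixed a b om gam k1 T4)
  /\
  (* (4) *)
  (1 < k1 -> Mc a b < gam * (1 + k1) ->
    forall om, 0 < om ->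
      (forall T, 0 < T -> has_fixed a b om gam k1 T) /\
      (forall T, 0 < T -> exactly_two_fixed a b om gam k1 T))
  /\
  (* (5) *)
  (1 < k1 -> gam * (1 + k1) < Mc a b ->
    exists T1 T2, 0 < T1 < T2 /\
    forall om, 0 < om ->
      (forall T, 0 < T -> (has_fixed a b om gam k1 T <-> (T <= T1 \/ T2 <= T))) /\
      (forall T, (0 < T < T1 \/ T2 < T) -> exactly_two_fixed a b om gam k1 T) /\
      exactly_one_fixed a b om gam k1 T1 /\
      exactly_one_fixed a b om gam k1 T2)
  /\
  (* the y-coordinates of the fixed points do not depend on omega *)
  (forall om om' T y, 0 < om -> 0 < om' ->
     ((exists s, is_fixed a b om gam k1 T s y) <->
      (exists s, is_fixed a b om' gam k1 T s y)))).
Proof.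
  pose proof (delta_gt1 a b ha hb hab) as hd.
  pose proof (Kc_pos a b ha hb hab) as hK.
  assert (hK0 : Kc a b <> 0) by lra.
  pose proof (Mc_eq a b hK hd) as hM.
  pose proof (fun T => g_le_M (Kc a b) (delta a b) T hK hd) as hle.
  pose proof (fun T => g_pos (Kc a b) (delta a b) T hK hd) as hpos.
  assert (hL12 : gam*(1-k1) < gam*(1+k1)) by nra.
  rewrite hM. clear hM.
  split; [|split; [|split; [|split; [|split]]]].
  -
    intros hk hM om hom T hT. rewrite has_fixed_g by auto.
    pose proof (hle T). lra.
  -
    intros hk hM1 hM2.
    assert (0 < gam*(1-k1)) by (apply Rmult_lt_0_compat; lra).
    destruct (level2 (Kc a b) (delta a b) (gam*(1-k1)) hK hd) as
      [Ta [Tb [h1 [h2 [h3 [h4 [Hge [Hle [Hgt Hlt]]]]]]]]]; auto.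
    exists Ta, Tb. split; [lra|]. intros om hom.
    split; [|split; [|split]].
    + intros T hT. rewrite has_fixed_g, <- Hge by auto. pose proof (hle T). lra.
    + intros T hT. apply two_fixed_g; auto. pose proof (hle T).
      apply Hgt in hT. lra.
    + apply one_fixed_g; auto.
    + apply one_fixed_g; auto.
  -
    intros hk hM.
    assert (0 < gam*(1-k1)) by (apply Rmult_lt_0_compat; lra).
    destruct (level2 (Kc a b) (delta a b) (gam*(1-k1)) hK hd) as
      [Ta1 [Tb1 [h1 [h2 [h3 [h4 [Hge1 [Hle1 [Hgt1 Hlt1]]]]]]]]]; [lra|lra|].
    destruct (level2 (Kc a b) (delta a b) (gam*(1+k1)) hK hd) as
      [Ta2 [Tb2 [i1 [i2 [i3 [i4 [Hge2 [Hle2 [Hgt2 Hlt2]]]]]]]]]; [lra|lra|].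
    assert (Ta1 < Ta2 < Tb1).
    { assert (gam*(1-k1) < g (Kc a b) (delta a b) Ta2) by lra. apply Hgt1; auto. }
    assert (Ta1 < Tb2 < Tb1).
    { assert (gam*(1-k1) < g (Kc a b) (delta a b) Tb2) by lra. apply Hgt1; auto. }
    exists Ta1, Ta2, Tb2, Tb1. split; [lra|split; [lra|]]. intros om hom.
    split; [|split; [|split; [|split; [|split]]]].
    + intros T hT. rewrite has_fixed_g by auto.
      rewrite Hge1, Hle2. lra.
    + intros T hT. apply two_fixed_g; auto. split.
      * apply Hgt1. lra.
      * apply Hlt2. lra.
    + apply one_fixed_g; auto.
    + apply one_fixed_g; auto.
    + apply one_fixed_g; auto.
    + apply one_fixed_g; auto.
  -
    intros hk hM om hom.
    assert (gam*(1-k1) < 0) by nra.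
    split; intros T hT; pose proof (hle T); pose proof (hpos T hT).
    + rewrite has_fixed_g by auto. lra.
    + apply two_fixed_g; auto. lra.
  -
    intros hk hM.
    assert (gam*(1-k1) < 0) by nra.
    destruct (level2 (Kc a b) (delta a b) (gam*(1+k1)) hK hd) as
      [Ta [Tb [h1 [h2 [h3 [h4 [Hge [Hle [Hgt Hlt]]]]]]]]]; [lra|lra|].
    exists Ta, Tb. split; [lra|]. intros om hom.
    split; [|split; [|split]].
    + intros T hT. pose proof (hpos T hT). rewrite has_fixed_g, <- Hle by auto. lra.
    + intros T hT. pose proof (hpos T ltac:(lra)). apply two_fixed_g; auto. split; [lra|].
      apply Hlt. lra.
    + apply one_fixed_g; auto.
    + apply one_fixed_g; auto.
  - intros om om' T y h1 h2. split; apply y_indep; auto.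
Qed.
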